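(* Let $\epsilon>0$ and $c>1/4+\epsilon$. Then for every $n$, $\mathrm{ORS}_n(cn)\le 1/\epsilon+1$.
   Context: For a matching $M$, $V(M)$ denotes the set of vertices matched by $M$. A sequence $M_1,\dots,M_t$ of pairwise edge-disjoint matchings is called ordered-induced if for every $i\in[t]$, $M_i$ is an induced matching of the graph with edge set $M_1\cup\dots\cup M_i$, i.e., no edge of $M_1\cup\cdots\cup M_{i-1}$ has both endpoints in $V(M_i)$. An $n$-vertex graph is an $\mathrm{ORS}_n(r,t)$ graph if its edge set is the union of an ordered-induced sequence of $t$ matchings, each of size exactly $r$. $\mathrm{ORS}_n(r)$ denotes the maximum $t$ for which an $\mathrm{ORS}_n(r,t)$ graph exists (for non-integer $r$, $r$ is replaced by $\lceil r\rceil$). *)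

(* Defs.v *)
From mathcomp Require Import all_boot all_order all_algebra.
Set Implicit Arguments. Unset Strict Implicit. Unset Printing Implicit Defensive.

Definition is_edge (n : nat) (e : {set 'I_n}) : bool := #|e| == 2.

Definition is_matching (n : nat) (M : {set {set 'I_n}}) : bool :=
  [forall e in M, is_edge e] &&
  [forall e in M, forall f in M, (e != f) ==> [disjoint e & f]].

Definition matched_vertices (n : nat) (M : {set {set 'I_n}}) : {set 'I_n} :=
  \bigcup_(e in M) e.

Definition pairwise_edge_disjoint (n t : nat) (M : 'I_t -> {set {set 'I_n}}) : Prop :=
  forall i j : 'I_t, i != j -> [disjoint M i & M j].

Definition ordered_induced (n t : nat) (M : 'I_t -> {set {set 'I_n}}) : Prop :=
  forall i j : 'I_t, (j < i)%N ->
    forall e, e \in M j -> ~~ (e \subset matched_vertices (M i)).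

(* M witnesses an ORS_n(r,t) graph (its edge set is the union of the M i). *)
Definition ORS_seq (n r t : nat) (M : 'I_t -> {set {set 'I_n}}) : Prop :=
  [/\ forall i, is_matching (M i),
      forall i, #|M i| = r,
      pairwise_edge_disjoint M
    & ordered_induced M].

(* Main.v *)
Require Import Defs.
From mathcomp Require Import all_boot all_order all_algebra.
From mathcomp Require Import zify ring lra.
Import Order.TTheory GRing.Theory Num.Theory.
Lemma card_matched n (M : {set {set 'I_n}}) :
  is_matching M -> #|matched_vertices M| = 2 * #|M|.
Proof.
case/andP=> /forallP He /forallP Hd.
have triv : trivIset M.
  apply/trivIsetP=> A B HA HB AB.
  by move: (Hd A); rewrite HA /= => /forallP /(_ B); rewrite HB AB.
have := (leq_card_cover M).2; rewrite triv.
move=> /eqP.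
rewrite /matched_vertices. move=> ->.
rewrite (eq_bigr (fun _ => 2%N)).
  by rewrite sum_nat_const mulnC.
by move=> e eM; move: (He e); rewrite eM /= => /eqP.
Qed.
Lemma inter_le n r t (M : 'I_t -> {set {set 'I_n}}) : ORS_seq r M ->
  forall i j : 'I_t, (j < i)%N ->
  #|matched_vertices (M i) :&: matched_vertices (M j)| <= r.
Proof.
case=> Hm Hc _ Hoi i j ji.
set A := _ :&: _.
pose f (v : 'I_n) := odflt set0 [pick e in M j | v \in e].
have fP v : v \in matched_vertices (M j) -> f v \in M j /\ v \in f v.
  move=> /bigcupP [e eM ve]; rewrite /f.
  case: pickP => [e' /andP [] //|/(_ e)]; by rewrite eM ve.
have inj : {in A &, injective f}.
  move=> v w /setIP [vi vj] /setIP [wi wj] fvw.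
  case: (eqVneq v w) => // vw.
  have [fM vf] := fP v vj; have [_ wf] := fP w wj.
  have He : #|f v| == 2.
    by move: (Hm j) => /andP [/forallP /(_ (f v))]; rewrite fM.
  have E : [set v; w] == f v.
    rewrite eqEcard (eqP He) cards2 vw andbT.
    by apply/subsetP=> x /set2P [] ->; rewrite // fvw.
  have: f v \subset matched_vertices (M i).
    by rewrite -(eqP E); apply/subsetP=> x /set2P [] ->.
  by move/negP: (Hoi i j ji _ fM).
rewrite -(card_in_imset inj) -(Hc j); apply: subset_leq_card.
apply/subsetP=> e /imsetP [v /setIP [_ vj] ->]; exact: (fP v vj).1.
Qed.
Lemma cauchy (T : finType) (x : T -> nat) :
  (\sum_v x v) ^ 2 <= #|T| * \sum_v x v ^ 2.
Proof.
rewrite -mulnn big_distrl /=.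
have E : \sum_u (x u * \sum_v x v) = \sum_u \sum_v x u * x v.
  by apply: eq_bigr => u _; rewrite big_distrr.
rewrite E -(leq_pmul2l (isT : 0 < 2)) big_distrr /=.
apply: (@leq_trans (\sum_u \sum_v (x u ^ 2 + x v ^ 2))).
  apply: leq_sum => u _; rewrite big_distrr; apply: leq_sum => v _.
  exact: (nat_Cauchy _ _).1.
rewrite (eq_bigr (fun u => #|T| * x u ^ 2 + \sum_v x v ^ 2)).
  by rewrite big_split /= -big_distrr sum_nat_const mul2n -addnn.
by move=> u _; rewrite big_split /= sum_nat_const.
Qed.

Lemma count_sum n t (V : 'I_t -> {set 'I_n}) :
  \sum_(v : 'I_n) \sum_(i : 'I_t) (v \in V i : nat) = \sum_i #|V i|.
Proof.
rewrite exchange_big /=; apply: eq_bigr => i _.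
rewrite -sum1_card [RHS]big_mkcond /=; apply: eq_bigr => v _; by case: (v \in V i).
Qed.

Lemma count_sq n t (V : 'I_t -> {set 'I_n}) :
  \sum_(v : 'I_n) (\sum_(i : 'I_t) (v \in V i : nat)) ^ 2
  = \sum_i \sum_j #|V i :&: V j|.
Proof.
have E : forall v : 'I_n, (\sum_(i : 'I_t) (v \in V i : nat)) ^ 2
   = \sum_i \sum_j (v \in V i :&: V j : nat).
  move=> v; rewrite -mulnn big_distrl /=; apply: eq_bigr => i _.
  rewrite big_distrr /=; apply: eq_bigr => j _.
  by rewrite inE; case: (v \in V i); case: (v \in V j).
rewrite (eq_bigr _ (fun v _ => E v)) exchange_big /=.
apply: eq_bigr => i _; rewrite exchange_big /=; apply: eq_bigr => j _.
rewrite -sum1_card [RHS]big_mkcond /=; apply: eq_bigr => v _; by case: (v \in _).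
Qed.

Lemma main_nat n r t (M : 'I_t -> {set {set 'I_n}}) : ORS_seq r M ->
  4 * r * t <= n * (t + 1).
Proof.
move=> H; have [Hm Hc _ _] := H.
pose V i := matched_vertices (M i).
have HV i : #|V i| = 2 * r by rewrite card_matched // Hc.
have HI i j : #|V i :&: V j| <= r + (i == j) * r.
  case: (eqVneq i j) => [->| ij]; first by rewrite setIid HV mul1n addnn -mul2n.
  rewrite mul0n addn0.
  case: (ltngtP i j) => [ij'|ji|e]; last by move: ij; rewrite (val_inj e) eqxx.
    by rewrite setIC; exact: (inter_le _ _ _ _ H _ _ ij').
  exact: (inter_le _ _ _ _ H _ _ ji).
have HQ : \sum_i \sum_j #|V i :&: V j| <= t * (t * r + r).
  rewrite -[t in t * _]card_ord -sum_nat_const; apply: leq_sum => i _.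
  apply: (@leq_trans (\sum_j (r + (i == j) * r))); first by apply: leq_sum.
  rewrite big_split /= sum_nat_const card_ord leq_add2l (bigD1 i) //= eqxx mul1n.
  by rewrite big1 ?addn0 // => j ji; rewrite eq_sym (negbTE ji).
have C := cauchy _ (fun v : 'I_n => \sum_(i : 'I_t) (v \in V i : nat)).
rewrite count_sq count_sum card_ord (eq_bigr _ (fun i _ => HV i)) sum_nat_const card_ord in C.
have {HQ} C2 := leq_trans C (leq_mul (leqnn n) HQ).
case: (posnP r) => [->|r0]; first by rewrite muln0 mul0n.
case: (posnP t) => [->|t0]; first by rewrite muln0.
have rt0 : 0 < r * t by rewrite muln_gt0 r0 t0.
rewrite -(leq_pmul2l rt0).
have E1 : (r * t) * (4 * r * t) = (t * (2 * r)) ^ 2 by ring.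
have E2 : (r * t) * (n * (t + 1)) = n * (t * (t * r + r)) by ring.
by rewrite E1 E2.
Qed.


Local Open Scope ring_scope.

Theorem theorem5p4 (R : archiRealFieldType) (eps c : R) (n : nat) :
  0 < eps -> 1 / 4 + eps < c -> (0 < n)%N ->
  forall (r t : nat) (M : 'I_t -> {set {set 'I_n}}),
    r%:Z = Num.ceil (c * n%:R) ->
    ORS_seq r M ->
    t%:R <= 1 / eps + 1.
Proof.
move=> e0 ce n0 r t M Hr H.
have Hn := main_nat _ _ _ _ H.
have Hn' : 4 * r%:R * t%:R <= n%:R * (t%:R + 1) :> R.
  have := Hn; rewrite -(ler_nat R) !natrM natrD /=.
  by [].
have Hc : c * n%:R <= r%:R.
  have := ceil_ge (c * n%:R); rewrite -Hr; by [].
have n1 : 1 <= n%:R :> R by rewrite ler1n.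
have t0 : 0 <= t%:R :> R by [].
have c0 : 0 < c by lra.
have A : 4 * c * n%:R * t%:R <= 4 * r%:R * t%:R.
  nra.
have B : (1 + 4 * eps) * n%:R * t%:R <= 4 * c * n%:R * t%:R.
  have : 0 <= n%:R * t%:R :> R by nra.
  nra.
have D : 4 * eps * t%:R * n%:R <= 1 * n%:R.
  have : (1 + 4 * eps) * n%:R * t%:R <= n%:R * (t%:R + 1) by lra.
  move=> h. nra.
have D2 : 4 * eps * t%:R <= 1.
  by rewrite -(ler_pM2r (_ : 0 < n%:R)) // ?ltr0n //; lra.
have D3 : t%:R <= 1 / eps.
  by rewrite ler_pdivlMr //; nra.
lra.
Qed.
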